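(* Let $P$ be a program, $F$ a set of facts, and let $\mathcal{ES}$ be the set of all embedding programs for $P\cup F$. Then $AS(P\cup F)=AS\big(\bigcap_{E\in\mathcal{ES}}E\big)$.
   Context: A program is a finite set of rules of the form $\alpha_1 \mid \dots \mid \alpha_k \;\texttt{:-}\; \beta_1,\dots,\beta_n, \mathit{not}\ \beta_{n+1},\dots,\mathit{not}\ \beta_m$ ($k,n,m\ge 0$), with $H(r)=\{\alpha_1,\dots,\alpha_k\}$, $B^+(r)=\{\beta_1,\dots,\beta_n\}$, $B^-(r)=\{\mathit{not}\ \beta_{n+1},\dots,\mathit{not}\ \beta_m\}$, $B(r)=B^+(r)\cup B^-(r)$. Programs are safe and contain no facts; facts are given as a set $F$ of ground atoms, each regarded as a ground rule with a single head atom and empty body; constants come from a fixed finite Herbrand universe. $\mathrm{grnd}(P)$ is the set of all ground instances of rules of $P$. For a ground program $G$ and a set of ground atoms $A$, the FLP reduct is $G^A=\{r\in G : A\models B(r)\}$; $A$ is an answer set of $G$ if $A$ is a subset-minimal model of $G^A$. $AS(G)$ is the set of answer sets of $G$, and $AS(P\cup F)$ denotes $AS(\mathrm{grnd}(P)\cup F)$. Embeddings: for a set of ground rules $R\subseteq \mathrm{grnd}(P)\cup F$ and a rule $r\in \mathrm{grnd}(P)\cup F$: $R\vdash_b r$ iff for every $a\in B^+(r)$ there is $r'\in R$ with $a\in H(r')$; $R\vdash_h r$ iff $r\in R$; $R\vdash r$ iff either $R\nvdash_b r$ or $R\vdash_h r$. A set $E\subseteq \mathrm{grnd}(P)\cup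 F$ is an embedding program for $P\cup F$ if $E\vdash r$ for every $r\in \mathrm{grnd}(P)\cup F$. *)

(* Defs.v *)
From Stdlib Require Import List.
Import ListNotations.
Set Implicit Arguments.

Section Syntax.
Variables (Pred Const Var : Type).

Inductive term : Type := TVar (v : Var) | TConst (c : Const).
Definition atom : Type := (Pred * list term)%type.
Definition gatom : Type := (Pred * list Const)%type.

(* a rule  a1 | ... | ak :- b1,...,bn, not b_{n+1},...,not b_m  *)
Record rule_of (A : Type) : Type := Rule {
  head : list A;
  pos  : list A;
  neg  : list A
}.
Definition rule := rule_of atom.
Definition grule := rule_of gatom.

Definition map_rule (A B : Type) (f : A -> B) (r : rule_of A) : rule_of B :=
  Rule (map f (head r)) (map f (pos r)) (map f (neg r)).

Definition subst_term (s : Var -> Const) (t : term) : Const :=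
  match t with TVar v => s v | TConst c => c end.
Definition subst_atom (s : Var -> Const) (a : atom) : gatom :=
  (fst a, map (subst_term s) (snd a)).

Definition var_in_atom (v : Var) (a : atom) : Prop := In (TVar v) (snd a).
Definition var_in_rule (v : Var) (r : rule) : Prop :=
  exists a, (In a (head r) \/ In a (pos r) \/ In a (neg r)) /\ var_in_atom v a.

Definition safe (r : rule) : Prop :=
  forall v, var_in_rule v r -> exists a, In a (pos r) /\ var_in_atom v a.

Definition is_fact (A : Type) (r : rule_of A) : Prop :=
  (exists a, head r = [a]) /\ pos r = [] /\ neg r = [].

Definition program := list rule.
Definition safe_program (P : program) : Prop := forall r, In r P -> safe r.
Definition no_facts (P : program) : Prop := forall r, In r P -> ~ is_fact r.

Definition atoms := gatom -> Prop.
Definition gprog := grule -> Prop.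

Definition grnd (P : program) : gprog :=
  fun g => exists r s, In r P /\ g = map_rule (subst_atom s) r.

Definition fact_rule (a : gatom) : grule := Rule [a] [] [].

Definition grnd_with_facts (P : program) (F : atoms) : gprog :=
  fun g => grnd P g \/ exists a, F a /\ g = fact_rule a.

Definition sat_body (A : atoms) (r : grule) : Prop :=
  (forall b, In b (pos r) -> A b) /\ (forall b, In b (neg r) -> ~ A b).
Definition is_model (G : gprog) (M : atoms) : Prop :=
  forall r, G r -> sat_body M r -> exists h, In h (head r) /\ M h.
(* FLP reduct G^A *)
Definition reduct (G : gprog) (A : atoms) : gprog :=
  fun r => G r /\ sat_body A r.
Definition subset_atoms (A B : atoms) : Prop := forall a, A a -> B a.
Definition answer_set (G : gprog) (A : atoms) : Prop :=
  is_model (reduct G A) A /\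
  forall B, subset_atoms B A -> is_model (reduct G A) B -> subset_atoms A B.

Definition derives_b (R : gprog) (r : grule) : Prop :=
  forall a, In a (pos r) -> exists r', R r' /\ In a (head r').
Definition derives_h (R : gprog) (r : grule) : Prop := R r.
Definition derives (R : gprog) (r : grule) : Prop :=
  ~ derives_b R r \/ derives_h R r.

Definition embedding_program (P : program) (F : atoms) (E : gprog) : Prop :=
  (forall r, E r -> grnd_with_facts P F r) /\
  (forall r, grnd_with_facts P F r -> derives E r).

Definition inter_embeddings (P : program) (F : atoms) : gprog :=
  fun r => forall E, embedding_program P F E -> E r.

End Syntax.

(* Main.v *)
Require Import Defs.
From Stdlib Require Import List.

Section S.
Variables (Pred Const Var : Type).
Variable (P : program Pred Const Var) (F : atoms Pred Const).

Let G := grnd_with_facts P F.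
Let I := inter_embeddings P F.

Lemma I_sub : forall r, I r -> G r.
Proof.
  intros r H. apply H. split; auto. intros r' Hr'. right. exact Hr'.
Qed.

Lemma I_closed : forall r, G r -> derives_b I r -> I r.
Proof.
  intros r Hr Hb E HE. destruct HE as [H1 H2].
  destruct (H2 r Hr) as [Hn | Hh]; [|exact Hh].
  exfalso; apply Hn. intros a Ha. destruct (Hb a Ha) as [r' [Ir' Hin]].
  exists r'. split; auto. apply Ir'. split; assumption.
Qed.

Definition Sh (a : gatom Pred Const) : Prop := exists r', I r' /\ In a (Defs.head r').

Lemma ans_in_S : forall H : gprog Pred Const,
  (forall r, H r -> G r) ->
  (forall r, G r -> derives_b I r -> H r) ->
  forall A, answer_set H A -> subset_atoms A Sh.
Proof.
  intros H HG HI A [Hm Hmin].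
  assert (Hs : subset_atoms A (fun a => A a /\ Sh a)).
  { apply Hmin. intros a [? ?]; auto.
    intros r [Hr Hsat] [Hp Hn].
    assert (Ir : I r).
    { apply I_closed; [apply HG; auto|]. intros a Ha. apply (Hp a Ha). }
    destruct (Hm r (conj Hr Hsat) Hsat) as [h [Hh Ah]].
    exists h. split; auto. split; auto. exists r; auto. }
  intros a Aa. apply (Hs a Aa).
Qed.

End S.

Theorem mainTheorem6 (Pred Const Var : Type)
  (Hfin : exists l : list Const, forall c : Const, In c l)
  (P : program Pred Const Var) (F : atoms Pred Const)
  (Hsafe : safe_program P) (Hnofacts : no_facts P) :
  forall A : atoms Pred Const,
    answer_set (grnd_with_facts P F) A <-> answer_set (inter_embeddings P F) A.
Proof.
  intros A.
  pose proof (@I_sub _ _ _ P F) as Isub.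
  pose proof (@I_closed _ _ _ P F) as Icl.
  split.
  - intro HA. pose proof (@ans_in_S _ _ _ P F (grnd_with_facts P F) (fun r h => h)
        (fun r h _ => h) A HA) as HS.
    destruct HA as [Hm Hmin]. split.
    + intros r [Ir Hsat] Hb. apply Hm; [split; auto|exact Hb].
    + intros B HBA HB. apply Hmin; auto.
      intros r [Gr Hsat] Hb. apply HB; auto. split; auto.
      apply Icl; auto. intros a Ha. destruct (HS a (HBA a (proj1 Hb a Ha))) as [r' [? ?]].
      exists r'; auto.
  - intro HA. pose proof (@ans_in_S _ _ _ P F _ Isub (fun r g d => Icl r g d) A HA) as HS.
    destruct HA as [Hm Hmin].
    assert (HM : is_model (reduct (grnd_with_facts P F) A) A).
    { intros r [Gr Hsat] Hb. apply Hm; auto. split; auto.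
      apply Icl; auto. intros a Ha. destruct (HS a (proj1 Hb a Ha)) as [r' [? ?]].
      exists r'; auto. }
    split; auto.
    intros B HBA HB. apply Hmin; auto.
    intros r [Ir Hsat] Hb. apply HB; auto. split; auto.
Qed.
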